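(* Let $\mathcal{H}$ be an $n$-dimensional (real or complex) Hilbert space, let $F=\{f_i\}_{i=1}^N$ be a tight frame for $\mathcal{H}$, and let $\{q_i\}_{i=1}^N$ be the weight number sequence associated with a probability sequence $\{p_i\}_{i=1}^N$. Then $(F,S_F^{-1}F)$ is a 1-erasure POD-pair if and only if $(F,S_F^{-1}F)\in\zeta_P^{(1)}$.
   Context: A finite sequence $F=\{f_i\}_{i=1}^N$ in $\mathcal{H}$ is a frame if there are $A,B>0$ with $A\|f\|^2\le\sum_{i=1}^N|\langle f,f_i\rangle|^2\le B\|f\|^2$ for all $f$; it is tight if one can take $A=B$. The frame operator is $S_Ff=\sum_i\langle f,f_i\rangle f_i$; canonical dual $S_F^{-1}F=\{S_F^{-1}f_i\}_{i=1}^N$. A frame $G=\{g_i\}_{i=1}^N$ is a dual of $F$ if $f=\sum_i\langle f,f_i\rangle g_i=\sum_i\langle f,g_i\rangle f_i$ for all $f$; then $(F,G)$ is an $(N,n)$ dual pair. A probability sequence is $\{p_i\}_{i=1}^N$ with $0\le p_i\le1$, $\sum p_i=1$; weight numbers $q_i=\frac{\sum_{j} p_j}{\sum_{j} p_j-p_i}\cdot\frac{N-1}{n}$. For $\Lambda\subseteq\{1,\dots,N\}$ the error operator is $E_{\Lambda,(F,G)}f=\sum_{i\in\Lambda}q_i\langle f,f_i\rangle g_i$. Let $\mathcal{O}_P^{(1)}(F,G)=\max_{|\Lambda|=1}\|E_{\Lambda,(F,G)}\|$ and $\mathcal{A}_P^{(1)}(F,G)=\max_{|\Lambda|=1}\frac{\|E_{\Lambda,(F,G)}\|+\rho(E_{\Lambda,(F,G)})}{2}$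 ($\rho$ = spectral radius); let $\mathcal{O}_P^{(1)}$ and $\mathcal{A}_P^{(1)}$ be their infima over all $(N,n)$ dual pairs in $\mathcal{H}$. A dual pair is a 1-erasure POD-pair if $\mathcal{O}_P^{(1)}(F,G)=\mathcal{O}_P^{(1)}$, and a 1-erasure PASOD-pair if $\mathcal{A}_P^{(1)}(F,G)=\mathcal{A}_P^{(1)}$; $\zeta_P^{(1)}$ is the set of 1-erasure PASOD-pairs. *)

(* Defs.v *)
From HB Require Import structures.
From mathcomp Require Import all_boot all_order all_algebra.
From mathcomp Require Import complex.
From mathcomp Require Import boolp classical_sets reals.

Set Implicit Arguments.
Unset Strict Implicit.
Unset Printing Implicit Defensive.

Import Order.TTheory GRing.Theory Num.Theory.
Local Open Scope ring_scope.
Local Open Scope classical_set_scope.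

(* The n-dimensional Hilbert space H is modelled inside 'cV[R[i]]_n:
   - complex case (isreal = false): H = C^n (all column vectors);
   - real case   (isreal = true) : H = R^n = vectors with real entries. *)

Section FrameDefs.
Variable R : realType.

Definition cmod (z : R[i]) : R := Num.sqrt (complex.Re z ^+ 2 + complex.Im z ^+ 2).

Definition inH (isreal : bool) n (v : 'cV[R[i]]_n) : Prop :=
  isreal -> forall k, complex.Im (v k ord0) = 0.

Definition dotp n (u v : 'cV[R[i]]_n) : R[i] :=
  \sum_(k < n) u k ord0 * conjc (v k ord0).

Definition vnorm n (v : 'cV[R[i]]_n) : R :=
  Num.sqrt (\sum_(k < n) cmod (v k ord0) ^+ 2).

Definition adjv n (v : 'cV[R[i]]_n) : 'rV[R[i]]_n := map_mx conjc v^T.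

Definition frame_sum n N (F : 'I_N -> 'cV[R[i]]_n) (f : 'cV[R[i]]_n) : R :=
  \sum_(i < N) cmod (dotp f (F i)) ^+ 2.

Definition is_frame (isreal : bool) n N (F : 'I_N -> 'cV[R[i]]_n) : Prop :=
  (forall i, inH isreal (F i)) /\
  exists A B : R, 0 < A /\ 0 < B /\
    forall f, inH isreal f ->
      A * vnorm f ^+ 2 <= frame_sum F f /\ frame_sum F f <= B * vnorm f ^+ 2.

Definition is_tight_frame (isreal : bool) n N (F : 'I_N -> 'cV[R[i]]_n) : Prop :=
  (forall i, inH isreal (F i)) /\
  exists A : R, 0 < A /\
    forall f, inH isreal f ->
      A * vnorm f ^+ 2 <= frame_sum F f /\ frame_sum F f <= A * vnorm f ^+ 2.

Definition frame_op n N (F : 'I_N -> 'cV[R[i]]_n) : 'M[R[i]]_n :=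
  \sum_(i < N) (F i *m adjv (F i)).

Definition canon_dual n N (F : 'I_N -> 'cV[R[i]]_n) : 'I_N -> 'cV[R[i]]_n :=
  fun i => invmx (frame_op F) *m F i.

Definition is_dual_pair (isreal : bool) n N (F G : 'I_N -> 'cV[R[i]]_n) : Prop :=
  is_frame isreal F /\ is_frame isreal G /\
  forall f, inH isreal f ->
    f = \sum_(i < N) dotp f (F i) *: G i /\ f = \sum_(i < N) dotp f (G i) *: F i.

Definition is_prob_seq N (p : 'I_N -> R) : Prop :=
  (forall i, 0 <= p i /\ p i <= 1) /\ \sum_(i < N) p i = 1.

Definition weight n N (p : 'I_N -> R) (i : 'I_N) : R :=
  (\sum_(j < N) p j) / (\sum_(j < N) p j - p i) * ((N%:R - 1) / n%:R).

Definition err_op n N (q : 'I_N -> R) (F G : 'I_N -> 'cV[R[i]]_n)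
  (L : {set 'I_N}) : 'M[R[i]]_n :=
  \sum_(i in L) ((q i)%:C)%C *: (G i *m adjv (F i)).

Definition opnorm (isreal : bool) n (T : 'M[R[i]]_n) : R :=
  sup [set vnorm (T *m f) | f in [set f | inH isreal f /\ vnorm f = 1]].

(* spectral radius: largest modulus of an eigenvalue (over C, i.e. of the
   complexification in the real case) *)
Definition specrad n (T : 'M[R[i]]_n) : R :=
  sup [set cmod l | l in [set l | exists v : 'cV[R[i]]_n, v != 0 /\ T *m v = l *: v]].

Definition O1 (isreal : bool) n N (q : 'I_N -> R) (F G : 'I_N -> 'cV[R[i]]_n) : R :=
  \big[Num.max/0]_(L : {set 'I_N} | #|L| == 1%N) opnorm isreal (err_op q F G L).

Definition A1 (isreal : bool) n N (q : 'I_N -> R) (F G : 'I_N -> 'cV[R[i]]_n) : R :=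
  \big[Num.max/0]_(L : {set 'I_N} | #|L| == 1%N)
     ((opnorm isreal (err_op q F G L) + specrad (err_op q F G L)) / 2).

Definition dual_pairs (isreal : bool) n N :
  set (('I_N -> 'cV[R[i]]_n) * ('I_N -> 'cV[R[i]]_n)) :=
  [set FG | is_dual_pair isreal FG.1 FG.2].

Definition O1_opt (isreal : bool) (n N : nat) (q : 'I_N -> R) : R :=
  inf [set O1 isreal q FG.1 FG.2 | FG in @dual_pairs isreal n N].

Definition A1_opt (isreal : bool) (n N : nat) (q : 'I_N -> R) : R :=
  inf [set A1 isreal q FG.1 FG.2 | FG in @dual_pairs isreal n N].

Definition is_POD1 (isreal : bool) n N (q : 'I_N -> R) (F G : 'I_N -> 'cV[R[i]]_n) : Prop :=
  is_dual_pair isreal F G /\ O1 isreal q F G = @O1_opt isreal n N q.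

Definition is_PASOD1 (isreal : bool) n N (q : 'I_N -> R) (F G : 'I_N -> 'cV[R[i]]_n) : Prop :=
  is_dual_pair isreal F G /\ A1 isreal q F G = @A1_opt isreal n N q.

Definition zeta1 (isreal : bool) n N (q : 'I_N -> R) :
  set (('I_N -> 'cV[R[i]]_n) * ('I_N -> 'cV[R[i]]_n)) :=
  [set FG | is_PASOD1 isreal q FG.1 FG.2].

End FrameDefs.

(* Main.v *)
Require Import Defs.
From HB Require Import structures.
From mathcomp Require Import all_boot all_order all_algebra.
From mathcomp Require Import complex.
From mathcomp Require Import boolp classical_sets reals.
From mathcomp Require Import ring lra.
Import Order.TTheory GRing.Theory Num.Theory.
Local Open Scope ring_scope.
Local Open Scope classical_set_scope.
Local Open Scope complex_scope.

Set Implicit Arguments. Unset Strict Implicit.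
Section Basic.
Variable R : realType.
Local Notation C := R[i].
Implicit Types (z w : C).

Lemma cmodE z : (cmod z)%:C = `|z|.
Proof. by rewrite normc_def. Qed.

Lemma cmod_ge0 z : 0 <= cmod z.
Proof. exact: sqrtr_ge0. Qed.

Lemma cmod2 z : ((cmod z) ^+ 2)%:C = z * conjc z.
Proof. by rewrite rmorphXn /= cmodE normCK. Qed.

Lemma lecR' (x y : R) : (x%:C <= y%:C :> C) = (x <= y).
Proof. exact: lecR. Qed.

Lemma cmodM z w : cmod (z * w) = cmod z * cmod w.
Proof. by apply: (@complexI R); rewrite rmorphM /= !cmodE normrM. Qed.

Lemma cmodJ z : cmod (conjc z) = cmod z.
Proof. by rewrite /cmod /=; case: z => a b /=; rewrite sqrrN. Qed.

Lemma cmodD z w : cmod (z + w) <= cmod z + cmod w.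
Proof. by rewrite -lecR' rmorphD /= !cmodE ler_normD. Qed.

Lemma cmodR (x : R) : cmod x%:C = `|x|.
Proof. by apply: (@complexI R); rewrite cmodE /= normc_def /= expr0n /= addr0 sqrtr_sqr. Qed.

Lemma cmod_sum I (r : seq I) P (F : I -> C) :
  cmod (\sum_(i <- r | P i) F i) <= \sum_(i <- r | P i) cmod (F i).
Proof.
elim/big_rec2: _ => [|i y x _ Hx]; first by rewrite /cmod /= expr0n /= addr0 sqrtr0.
by apply: le_trans (cmodD _ _) _; rewrite lerD2l.
Qed.

Lemma realCM (x y : R) : (x * y)%:C = x%:C * y%:C :> C.
Proof. exact: rmorphM. Qed.
Lemma realCD (x y : R) : (x + y)%:C = x%:C + y%:C :> C.
Proof. exact: rmorphD. Qed.
Lemma realCB (x y : R) : (x - y)%:C = x%:C - y%:C :> C.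
Proof. exact: rmorphB. Qed.
Lemma realCV (x : R) : (x^-1)%:C = (x%:C)^-1 :> C.
Proof. exact: fmorphV. Qed.
Lemma realC1 : (1 : R)%:C = 1 :> C.
Proof. by []. Qed.
Lemma realC0 : (0 : R)%:C = 0 :> C.
Proof. by []. Qed.
Lemma realCn (k : nat) : (k%:R : R)%:C = k%:R :> C.
Proof. exact: rmorph_nat. Qed.
Lemma realC_sum I (r : seq I) P (F : I -> R) :
  (\sum_(i <- r | P i) F i)%:C = \sum_(i <- r | P i) (F i)%:C :> C.
Proof. exact: rmorph_sum. Qed.

Lemma conjcM' (a b : C) : conjc (a * b) = conjc a * conjc b.
Proof. exact: rmorphM. Qed.
Lemma conjcD' (a b : C) : conjc (a + b) = conjc a + conjc b.
Proof. exact: rmorphD. Qed.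
Lemma conjcN' (a : C) : conjc (- a) = - conjc a.
Proof. exact: rmorphN. Qed.

End Basic.

Section Vec.
Variable R : realType.
Local Notation C := R[i].
Variable n : nat.
Implicit Types (u v w : 'cV[C]_n) (a b : C).

Lemma vnorm_ge0 v : 0 <= vnorm v.
Proof. exact: sqrtr_ge0. Qed.

Lemma vnorm2 v : vnorm v ^+ 2 = \sum_(k < n) cmod (v k ord0) ^+ 2.
Proof. by rewrite sqr_sqrtr // sumr_ge0 // => k _; rewrite sqr_ge0. Qed.

Lemma dotpvv v : dotp v v = (vnorm v ^+ 2)%:C.
Proof. by rewrite vnorm2 rmorph_sum; apply: eq_bigr => k _; rewrite -cmod2. Qed.

Lemma dotpJ u v : conjc (dotp u v) = dotp v u.
Proof.
rewrite /dotp rmorph_sum; apply: eq_bigr => k _.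
by rewrite rmorphM /= conjcK mulrC.
Qed.

Lemma dotpDl u v w : dotp (u + v) w = dotp u w + dotp v w.
Proof. by rewrite /dotp -big_split; apply: eq_bigr => k _; rewrite !mxE mulrDl. Qed.

Lemma dotpZl a u w : dotp (a *: u) w = a * dotp u w.
Proof. by rewrite /dotp mulr_sumr; apply: eq_bigr => k _; rewrite !mxE mulrA. Qed.

Lemma dotpDr u v w : dotp w (u + v) = dotp w u + dotp w v.
Proof. by rewrite -dotpJ dotpDl rmorphD /= !dotpJ. Qed.

Lemma dotpZr a u w : dotp w (a *: u) = conjc a * dotp w u.
Proof. by rewrite -dotpJ dotpZl rmorphM /= !dotpJ. Qed.

Lemma dotp0l w : dotp 0 w = 0.
Proof. by rewrite /dotp big1 // => k _; rewrite mxE mul0r. Qed.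

Lemma dotp0r w : dotp w 0 = 0.
Proof. by rewrite -dotpJ dotp0l rmorph0. Qed.

Lemma dotpNl u w : dotp (- u) w = - dotp u w.
Proof. by rewrite -scaleN1r dotpZl mulN1r. Qed.

Lemma dotpNr u w : dotp w (- u) = - dotp w u.
Proof. by rewrite -dotpJ dotpNl rmorphN /= dotpJ. Qed.

Lemma dotp_suml I (r : seq I) P (F : I -> 'cV[C]_n) w :
  dotp (\sum_(i <- r | P i) F i) w = \sum_(i <- r | P i) dotp (F i) w.
Proof.
rewrite /dotp exchange_big /=; apply: eq_bigr => k _.
by rewrite summxE mulr_suml.
Qed.

Lemma vnormZ a v : vnorm (a *: v) = cmod a * vnorm v.
Proof.
apply: (@pexpIrn _ 2) => //; rewrite ?nnegrE ?mulr_ge0 ?cmod_ge0 ?vnorm_ge0 //.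
rewrite exprMn !vnorm2 mulr_sumr; apply: eq_bigr => k _.
by rewrite mxE cmodM exprMn.
Qed.

Lemma vnorm_eq0 v : (vnorm v == 0) = (v == 0).
Proof.
apply/idP/idP => [/eqP H|/eqP ->]; last first.
  by rewrite /vnorm big1 ?sqrtr0 // => k _; rewrite mxE /cmod /= expr0n /= addr0 sqrtr0 expr0n.
have : vnorm v ^+ 2 = 0 by rewrite H expr0n.
rewrite vnorm2 => /eqP; rewrite psumr_eq0 => [/allP Hall|k _]; last by rewrite sqr_ge0.
apply/eqP/matrixP => k j; rewrite (ord1 j) mxE.
have /Hall : k \in index_enum 'I_n by rewrite mem_index_enum.
rewrite /= sqrf_eq0 => /eqP Hk.
by apply/eqP; rewrite -normr_eq0 -cmodE Hk.
Qed.

Lemma CS u v : cmod (dotp u v) <= vnorm u * vnorm v.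
Proof.
have [->|v0] := eqVneq v 0.
  by rewrite dotp0r /cmod /= expr0n /= addr0 sqrtr0 mulr_ge0 ?vnorm_ge0.
have vv0 : 0 < vnorm v by rewrite lt_def vnorm_eq0 v0 vnorm_ge0.
rewrite -(@ler_pXn2r _ 2) ?nnegrE ?mulr_ge0 ?cmod_ge0 ?vnorm_ge0 //.
rewrite -lecR' exprMn (@realCM R (vnorm u ^+ 2)) -!dotpvv cmod2 dotpJ.
set t := dotp u v / dotp v v.
have vvR : dotp v v = (vnorm v ^+ 2)%:C by rewrite dotpvv.
have vvne : dotp v v != 0.
  rewrite vvR; apply/eqP => /(@complexI R) /eqP; by rewrite expf_eq0 /= gt_eqF.
have H0 : 0 <= dotp (u - t *: v) (u - t *: v) by rewrite dotpvv lecR' sqr_ge0.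
have tJ : conjc t = dotp v u / dotp v v.
  by rewrite /t rmorphM /= dotpJ conjc_inv vvR conjc_real.
have E : dotp (u - t *: v) (u - t *: v) =
    (dotp u u * dotp v v - dotp u v * dotp v u) / dotp v v.
  rewrite dotpDl !dotpDr !dotpNl !dotpNr !dotpZl !dotpZr tJ /t.
  by field.
have vvp : 0 < dotp v v by rewrite vvR ltcR exprn_gt0.
rewrite E in H0.
have := mulr_ge0 H0 (ltW vvp); by rewrite divfK // subr_ge0.
Qed.

End Vec.

Section Ops.
Variable R : realType.
Local Notation C := R[i].
Variable isreal : bool.
Variable n : nat.
Implicit Types (u v w f g : 'cV[C]_n).

Lemma adjv_mul f v : adjv f *m v = (dotp v f)%:M.
Proof.
apply/matrixP => i j; rewrite (ord1 i) (ord1 j) !mxE /= mulr1n /dotp.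
by apply: eq_bigr => k _; rewrite !mxE mulrC.
Qed.

Lemma rank1_mul g f v : (g *m adjv f) *m v = dotp v f *: g.
Proof. by rewrite -mulmxA adjv_mul mul_mx_scalar. Qed.

Lemma err_op1 N (q : 'I_N -> R) (F G : 'I_N -> 'cV[C]_n) i :
  err_op q F G [set i] = (q i)%:C *: (G i *m adjv (F i)).
Proof. by rewrite /err_op big_set1. Qed.

Lemma sup_ge0 (S : set R) : (forall x, S x -> 0 <= x) -> has_ubound S -> 0 <= sup S.
Proof.
move=> H ub; have [[x Sx]|S0] := pselect (exists x, S x).
  by apply: le_trans (H x Sx) _; apply: ub_le_sup.
have -> : S = set0 by apply/seteqP; split => x //= Sx; exfalso; apply: S0; exists x.
by rewrite sup0.
Qed.

Lemma sup_le (S : set R) b : 0 <= b -> (forall x, S x -> x <= b) -> sup S <= b.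
Proof.
move=> b0 H; have [[x Sx]|S0] := pselect (exists x, S x).
  by apply: ge_sup; [exists x | move=> y Sy; apply: H].
have -> : S = set0 by apply/seteqP; split => x //= Sx; exfalso; apply: S0; exists x.
by rewrite sup0.
Qed.

Definition unitH v := inH isreal v /\ vnorm v = 1.

Lemma opnorm_le (T : 'M[C]_n) b : 0 <= b ->
  (forall v, unitH v -> vnorm (T *m v) <= b) -> opnorm isreal T <= b.
Proof. by move=> b0 H; apply: sup_le => // x [v Hv <-]; apply: H. Qed.

Lemma opnorm_ub (T : 'M[C]_n) b :
  (forall v, unitH v -> vnorm (T *m v) <= b) ->
  forall v, unitH v -> vnorm (T *m v) <= opnorm isreal T.
Proof.
move=> H v Hv; apply: ub_le_sup; last by exists v.
by exists b => x [w Hw <-]; apply: H.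
Qed.

Lemma opnorm_ge0 (T : 'M[C]_n) b :
  (forall v, unitH v -> vnorm (T *m v) <= b) -> 0 <= opnorm isreal T.
Proof.
move=> H; apply: sup_ge0; first by move=> x [v _ <-]; apply: vnorm_ge0.
by exists b => x [w Hw <-]; apply: H.
Qed.

Lemma rank1_apply (q : R) g f v :
  (q%:C *: (g *m adjv f)) *m v = (q%:C * dotp v f) *: g.
Proof. by rewrite -scalemxAl rank1_mul scalerA. Qed.

Lemma rank1_vnorm (q : R) g f v : 0 <= q ->
  vnorm ((q%:C *: (g *m adjv f)) *m v) = q * cmod (dotp v f) * vnorm g.
Proof. by move=> q0; rewrite rank1_apply vnormZ cmodM cmodR ger0_norm. Qed.

Lemma rank1_bound (q : R) g f v : 0 <= q -> unitH v ->
  vnorm ((q%:C *: (g *m adjv f)) *m v) <= q * vnorm f * vnorm g.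
Proof.
move=> q0 [_ v1]; rewrite rank1_vnorm // ler_wpM2r ?vnorm_ge0 // ler_wpM2l //.
by apply: le_trans (CS v f) _; rewrite v1 mul1r.
Qed.

Lemma inH_scale (r : R) v : inH isreal v -> inH isreal (r%:C *: v).
Proof. move=> H /H Hv k; rewrite mxE; move: (Hv k); case: (v k ord0) => a b /= ->. by rewrite mulr0 mul0r addr0. Qed.

End Ops.

Section Rank1.
Variable R : realType.
Local Notation C := R[i].
Variable isreal : bool.
Variable n : nat.
Implicit Types (u v w f g : 'cV[C]_n).

Lemma cmod0 : cmod (0 : C) = 0.
Proof. by rewrite /cmod /= expr0n /= addr0 sqrtr0. Qed.

Lemma rank1_opnorm_lb (q : R) g f : 0 <= q -> inH isreal g ->
  q * cmod (dotp g f) <= opnorm isreal (q%:C *: (g *m adjv f)).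
Proof.
move=> q0 gH.
have Hb := @rank1_bound R isreal n q g f _ q0.
have [g0|g0] := eqVneq g 0.
  by rewrite g0 dotp0l cmod0 mulr0; rewrite -g0; apply: opnorm_ge0 Hb.
have gp : 0 < vnorm g by rewrite lt_def vnorm_eq0 g0 vnorm_ge0.
pose v := ((vnorm g)^-1)%:C *: g.
have vH : unitH isreal v.
  split; first exact: inH_scale.
  by rewrite vnormZ cmodR ger0_norm ?invr_ge0 ?vnorm_ge0 // mulVf // gt_eqF.
have := opnorm_ub Hb vH; rewrite rank1_vnorm // /v dotpZl cmodM cmodR.
rewrite ger0_norm ?invr_ge0 ?vnorm_ge0 //.
have -> : q * ((vnorm g)^-1 * cmod (dotp g f)) * vnorm g = q * cmod (dotp g f).
  by field; rewrite gt_eqF.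
by [].
Qed.

Lemma rank1_eig (q : R) g f (l : C) v : v != 0 ->
  (q%:C *: (g *m adjv f)) *m v = l *: v -> l = 0 \/ l = q%:C * dotp g f.
Proof.
move=> v0; rewrite rank1_apply => E.
have [d0|d0] := eqVneq (dotp v f) 0.
  left; move: E; rewrite d0 mulr0 scale0r => /esym/eqP.
  by rewrite scaler_eq0 (negbTE v0) orbF => /eqP.
right; have := congr1 (fun x => dotp x f) E; rewrite !dotpZl => E2.
apply: (mulIf d0); rewrite -E2; ring.
Qed.

Lemma rank1_specrad (q : R) g f : 0 <= q ->
  specrad (q%:C *: (g *m adjv f)) = q * cmod (dotp g f).
Proof.
move=> q0; set T := q%:C *: _.
have ub : forall x, [set cmod l | l in [set l | exists v : 'cV[C]_n, v != 0 /\ T *m v = l *: v]] x ->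
    0 <= x <= q * cmod (dotp g f).
  move=> x [l [v [v0 Ev]] <-]; rewrite cmod_ge0 /=.
  case: (rank1_eig v0 Ev) => ->; first by rewrite cmod0 mulr_ge0 ?cmod_ge0.
  by rewrite cmodM cmodR ger0_norm.
apply/eqP; rewrite eq_le; apply/andP; split.
  by apply: sup_le; [rewrite mulr_ge0 ?cmod_ge0 | move=> x /ub /andP[]].
have [z0|zn0] := eqVneq (q * cmod (dotp g f)) 0.
  by rewrite z0; apply: sup_ge0 => [x /ub /andP[]//|]; exists (q * cmod (dotp g f)) => x /ub /andP[].
apply: ub_le_sup; first by exists (q * cmod (dotp g f)) => x /ub /andP[].
exists (q%:C * dotp g f); last by rewrite cmodM cmodR ger0_norm.
exists g; split.
  apply/eqP => g0; move: zn0; rewrite g0 dotp0l cmod0 mulr0 eqxx //.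
by rewrite /T rank1_apply.
Qed.

End Rank1.

Section Dual.
Variable R : realType.
Local Notation C := R[i].
Variable isreal : bool.
Variable n N : nat.
Implicit Types (F G h : 'I_N -> 'cV[C]_n) (f : 'cV[C]_n).

Definition Mop F G : 'M[C]_n := \sum_(i < N) G i *m adjv (F i).

Lemma recon_M F G f : \sum_(i < N) dotp f (F i) *: G i = Mop F G *m f.
Proof. by rewrite /Mop mulmx_suml; apply: eq_bigr => i _; rewrite rank1_mul. Qed.

Lemma inH_delta b : inH isreal (delta_mx b 0 : 'cV[C]_n).
Proof. by move=> _ k; rewrite mxE; case: (_ && _). Qed.

Lemma dual_M F G : is_dual_pair isreal F G -> Mop F G = 1%:M.
Proof.
move=> [_ [_ H]]; apply/matrixP => a b.
have [H1 _] := H _ (inH_delta b); rewrite recon_M in H1.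
have := congr1 (fun M : 'cV[C]_n => M a 0) H1.
rewrite -colE => E; rewrite !mxE in E; rewrite -E !mxE; by case: (a == b).
Qed.

Lemma dual_trace F G : is_dual_pair isreal F G -> \sum_(i < N) dotp (G i) (F i) = n%:R.
Proof.
move=> D; have := congr1 mxtrace (dual_M D); rewrite mxtrace1 /Mop raddf_sum => <-.
apply: eq_bigr => i _; by rewrite /= mxtrace_mulC adjv_mul mxtrace_scalar.
Qed.

Definition Gam G : 'M[C]_(n, N) := \matrix_(k, i) G i k ord0.
Definition PhiS F : 'M[C]_(N, n) := \matrix_(i, k) conjc (F i k ord0).

Lemma Mop_mat F G : Mop F G = Gam G *m PhiS F.
Proof.
apply/matrixP => a b; rewrite !mxE /Mop summxE; apply: eq_bigr => i _.
by rewrite !mxE big_ord1 !mxE.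
Qed.

Lemma dual_rank F G : is_dual_pair isreal F G -> (n <= N)%N.
Proof.
move=> D; have := mulmx_max_rank (Gam G) (PhiS F).
by rewrite -Mop_mat dual_M // mxrank1.
Qed.

Lemma frame_sumE h f : (frame_sum h f)%:C = \sum_(i < N) dotp f (h i) * dotp (h i) f.
Proof.
rewrite /frame_sum realC_sum; apply: eq_bigr => i _.
by rewrite cmod2 dotpJ.
Qed.

Lemma parseval_dual h : (forall i, inH isreal (h i)) -> Mop h h = 1%:M ->
  is_dual_pair isreal h h.
Proof.
move=> hH M1.
have rec f : f = \sum_(i < N) dotp f (h i) *: h i by rewrite recon_M M1 mul1mx.
have fs f : frame_sum h f = vnorm f ^+ 2.
  apply: (@complexI R); rewrite frame_sumE -dotpvv.
  have -> : dotp f f = dotp (\sum_(i < N) dotp f (h i) *: h i) f by rewrite -rec.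
  rewrite dotp_suml.
  by apply: eq_bigr => i _; rewrite dotpZl.
have fr : is_frame isreal h.
  split => //; exists 1, 1; do 2 split => //; move=> f _; by rewrite fs mul1r.
by split => //; split => // f _; split; apply: rec.
Qed.

End Dual.

Section DualSq.
Variable R : realType.
Local Notation C := R[i].
Variable isreal : bool.
Variable n : nat.

Lemma dual_biorth (F G : 'I_n -> 'cV[C]_n) : is_dual_pair isreal F G ->
  forall i j, dotp (G i) (F j) = (i == j)%:R.
Proof.
move=> D i j; have := dual_M D; rewrite Mop_mat => /mulmx1C /matrixP /(_ j i).
rewrite !mxE eq_sym => <-; apply: eq_bigr => k _; by rewrite !mxE mulrC.
Qed.

End DualSq.

Section Pars.
Variable R : realType.
Local Notation C := R[i].
Variable d : nat.
Implicit Types (u v w k e : 'cV[C]_d) (x y : R).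

Definition realv v := forall j, complex.Im (v j ord0) = 0.
Definition Dm (m : nat) : 'M[C]_d := \matrix_(i, j) ((i == j) && (i < m)%N)%:R.
Definition zb (m : nat) v := forall j : 'I_d, (m <= j)%N -> v j ord0 = 0.

Lemma adjvD u w : adjv (u + w) = adjv u + adjv w.
Proof. by apply/matrixP => i j; rewrite !mxE conjcD'. Qed.

Lemma adjvZ x u : adjv (x%:C *: u) = x%:C *: adjv u.
Proof. by apply/matrixP => i j; rewrite !mxE conjcM' conjc_real. Qed.

Lemma adjvN u : adjv (- u) = - adjv u.
Proof. by apply/matrixP => i j; rewrite !mxE conjcN'. Qed.

Lemma outer2 x y u w :
  (x%:C *: u + y%:C *: w) *m adjv (x%:C *: u + y%:C *: w) =
  (x * x)%:C *: (u *m adjv u) + (x * y)%:C *: (u *m adjv w) +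
  (y * x)%:C *: (w *m adjv u) + (y * y)%:C *: (w *m adjv w).
Proof.
rewrite adjvD !adjvZ mulmxDl !mulmxDr -!scalemxAl -!scalemxAr !scalerA !realCM.
by rewrite !addrA.
Qed.

Lemma dotp2 x y u w : dotp u w = 0 ->
  dotp (x%:C *: u + y%:C *: w) (x%:C *: u + y%:C *: w) =
  (x * x)%:C * dotp u u + (y * y)%:C * dotp w w.
Proof.
move=> uw; have wu : dotp w u = 0 by rewrite -dotpJ uw rmorph0.
rewrite dotpDl !dotpDr !dotpZl !dotpZr !conjc_real uw wu !mulr0 !addr0 add0r.
by rewrite !realCM !mulrA.
Qed.

Lemma realvD u w : realv u -> realv w -> realv (u + w).
Proof. move=> Hu Hw j; rewrite mxE; move: (Hu j) (Hw j); case: (u j ord0) => a b; case: (w j ord0) => a' b'; simpc; by move=> /= -> ->; rewrite addr0. Qed.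

Lemma realvZ x u : realv u -> realv (x%:C *: u).
Proof. by move=> Hu j; rewrite mxE; move: (Hu j); case: (u j ord0) => a b /= ->; rewrite mulr0 mul0r addr0. Qed.

Lemma realvN u : realv u -> realv (- u).
Proof. by move=> Hu j; rewrite mxE; move: (Hu j); case: (u j ord0) => a b /= ->; rewrite oppr0. Qed.

Lemma zbD m u w : zb m u -> zb m w -> zb m (u + w).
Proof. by move=> Hu Hw j Hj; rewrite mxE Hu // Hw // addr0. Qed.

Lemma zbZ m a u : zb m u -> zb m (a *: u).
Proof. by move=> Hu j Hj; rewrite mxE Hu // mulr0. Qed.

Lemma zbN m u : zb m u -> zb m (- u).
Proof. by move=> Hu j Hj; rewrite mxE Hu // oppr0. Qed.

Lemma zbW m m' u : (m <= m')%N -> zb m u -> zb m' u.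
Proof. by move=> le Hu j Hj; apply: Hu; apply: leq_trans Hj. Qed.


End Pars.

Section Pars2.
Variable R : realType.
Local Notation C := R[i].
Variable d : nat.
Implicit Types (u v w k e : 'cV[C]_d) (x y : R).

Lemma dotp_delta v (j : 'I_d) : dotp v (delta_mx j 0) = v j ord0.
Proof.
rewrite /dotp (bigD1 j) //= big1 => [|i /negbTE ij]; rewrite !mxE ?eqxx ?ij //=.
  by rewrite oppr0 addr0 -[1 +i* 0]/(1 : C) mulr1.
by rewrite oppr0 -[0 *i]/(0 : C) mulr0.
Qed.

Lemma delta_real (j : 'I_d) : realv (delta_mx j 0 : 'cV[C]_d).
Proof. by move=> k; rewrite mxE; case: (_ && _). Qed.

Lemma delta_zb (j : 'I_d) : zb j.+1 (delta_mx j 0 : 'cV[C]_d).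
Proof.
move=> k Hk; rewrite mxE; case: eqP => //= kj.
by move: Hk; rewrite kj ltnn.
Qed.

Lemma outer1 x u : (x%:C *: u) *m adjv (x%:C *: u) = (x * x)%:C *: (u *m adjv u).
Proof. by rewrite adjvZ -scalemxAl -scalemxAr scalerA realCM. Qed.

Lemma Dm0 : Dm R d 0 = 0.
Proof. by apply/matrixP => i j; rewrite !mxE ltn0 andbF. Qed.

Lemma DmS j (Hj : (j < d)%N) :
  Dm R d j.+1 = Dm R d j + delta_mx (Ordinal Hj) 0 *m adjv (delta_mx (Ordinal Hj) 0).
Proof.
apply/matrixP => a b; rewrite !mxE big_ord1 !mxE /= !andbT conjc_nat.
have Ea : (a == Ordinal Hj) = (nat_of_ord a == j) by [].
have Eb : (b == Ordinal Hj) = (nat_of_ord b == j) by [].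
rewrite Ea Eb ltnS leq_eqVlt.
case: (a =P b) => [<-|ab] /=.
  case: (nat_of_ord a =P j) => [->|naj] /=; first by rewrite ltnn mulr1 add0r.
  by rewrite mulr0 addr0.
case: (nat_of_ord a =P j) => [aj|naj] /=; last by rewrite mul0r addr0.
case: (nat_of_ord b =P j) => [bj|nbj] /=; last by rewrite mulr0 addr0.
by exfalso; apply: ab; apply: val_inj; rewrite /= aj bj.
Qed.


Lemma vnorm2_of v x : dotp v v = x%:C -> vnorm v ^+ 2 = x.
Proof. by rewrite dotpvv => /(@complexI R). Qed.

Lemma comb4 (a1 a2 a3 a4 b1 b2 b3 b4 : C) (X Y Z W : 'M[C]_d) :
  a1 + b1 = 1 -> a2 + b2 = 0 -> a3 + b3 = 0 -> a4 + b4 = 1 ->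
  a1 *: X + a2 *: Y + a3 *: Z + a4 *: W + (b1 *: X + b2 *: Y + b3 *: Z + b4 *: W)
  = X + W.
Proof.
move=> h1 h2 h3 h4; apply/matrixP => i j; rewrite !mxE.
have -> : b1 = 1 - a1 by rewrite -h1; ring.
have -> : b2 = - a2 by rewrite -[RHS]add0r -h2; ring.
have -> : b3 = - a3 by rewrite -[RHS]add0r -h3; ring.
have -> : b4 = 1 - a4 by rewrite -h4; ring.
ring.
Qed.

End Pars2.

Section Pars3.
Variable R : realType.
Local Notation C := R[i].
Variable d : nat.

Lemma vnormZ2 (x : R) (u : 'cV[C]_d) : vnorm (x%:C *: u) ^+ 2 = x * x * vnorm u ^+ 2.
Proof. by rewrite vnormZ cmodR exprMn real_normK ?num_real // expr2. Qed.

Lemma dotp_ee (j : 'I_d) : dotp (delta_mx j 0 : 'cV[C]_d) (delta_mx j 0) = 1.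
Proof. by rewrite dotp_delta mxE !eqxx. Qed.

Lemma parseval_seq (L : nat) : forall (s : seq R) (m : nat), size s = L -> (m <= d)%N ->
  all (fun x => 0 <= x <= 1) s -> \sum_(x <- s) x = m%:R ->
  exists hs : seq 'cV[C]_d, [/\ size hs = size s,
    forall j, (j < size s)%N -> vnorm (nth 0 hs j) ^+ 2 = nth 0 s j,
    forall j, (j < size s)%N -> realv (nth 0 hs j) /\ zb m (nth 0 hs j) &
    \sum_(h <- hs) h *m adjv h = Dm R d m].
Proof.
elim: L => [|L IH] s m.
  case: s => // _ md _; rewrite big_nil => /esym /eqP; rewrite pnatr_eq0 => /eqP m0.
  by exists [::]; split => //; rewrite big_nil m0 Dm0.
case: s => [//|a s1] /= [sz] md hs01 hsum.
move/andP: hs01 => [ha hs01].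
case: s1 sz hs01 hsum => [|a2 s2] sz hs01 hsum.
  rewrite big_cons big_nil addr0 in hsum.
  case: m md hsum => [|m'] md hsum.
    exists [:: 0]; split => //.
    - case=> // _; apply: vnorm2_of; by rewrite dotp0l hsum.
    - case=> // _; split => j /=; rewrite mxE //.
    - by rewrite big_cons big_nil mul0mx addr0 Dm0.
  have m'0 : m' = 0%N.
    move: ha; rewrite hsum => /andP[_]; rewrite (_ : 1 = 1%:R) // ler_nat ltnS leqn0.
    by move/eqP.
  subst m'.
  exists [:: delta_mx (Ordinal md) 0]; split => //.
  - case=> // _; apply: vnorm2_of; by rewrite dotp_ee hsum.
  - case=> // _ /=; split; first exact: delta_real.
    move=> k Hk; rewrite mxE; case: (k =P Ordinal md) => [kj|] //=.
    by move: Hk; rewrite kj.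
  - by rewrite big_cons big_nil addr0 (@DmS R d 0 md) Dm0 add0r.
move/andP: hs01 => [ha2 hs01].
rewrite !big_cons in hsum.
move: ha ha2 => /andP[a0 a1] /andP[a20 a21].
have S2 : 0 <= \sum_(x <- s2) x.
  rewrite big_seq; apply: sumr_ge0 => x xs.
  by move/allP: hs01 => /(_ x xs) /andP[].
have [le1|gt1] := leP (a + a2) 1.
  have B1 : all (fun x => 0 <= x <= 1) ((a + a2) :: s2) by rewrite /= le1 addr_ge0.
  have B2 : \sum_(x <- (a + a2) :: s2) x = m%:R by rewrite big_cons -hsum addrA.
  have [hs' [sz' nrm rz sm]] := IH ((a + a2) :: s2) m sz md B1 B2.
  case: hs' sz' nrm rz sm => [//|k hs2] [sz'] nrm rz sm.
  set b := a + a2 in nrm le1 *.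
  pose al := if b == 0 then 1 else Num.sqrt (a / b).
  pose be := if b == 0 then 0 else Num.sqrt (a2 / b).
  have [Hal Hbe Hab] : [/\ al * al * b = a, be * be * b = a2 & al * al + be * be = 1].
    rewrite /al /be; case: eqP => [b0|/eqP b0].
      have a00 : a = 0 by move: b0; rewrite /b; lra.
      have a200 : a2 = 0 by move: b0; rewrite /b; lra.
      by rewrite b0 a00 a200; split; ring.
    have bp : 0 < b by rewrite lt_def b0 /b addr_ge0.
    rewrite -!expr2 !sqr_sqrtr ?divr_ge0 ?(ltW bp) //.
    by split; [field | field | rewrite -mulrDl divff].
  have nk := nrm 0%N isT; rewrite /= in nk.

  exists [:: al%:C *: k, be%:C *: k & hs2]; split => /=.
  - by rewrite sz'.
  - case=> [_|[_|j Hj]] /=.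
    + by rewrite vnormZ2 nk.
    + by rewrite vnormZ2 nk.
    + by apply: (nrm j.+1).
  - case=> [_|[_|j Hj]] /=.
    + have [r z] := rz 0%N isT; split; [exact: realvZ | exact: zbZ].
    + have [r z] := rz 0%N isT; split; [exact: realvZ | exact: zbZ].
    + by apply: (rz j.+1).
  - rewrite !big_cons !outer1 addrA -scalerDl -realCD Hab realC1 scale1r.
    by move: sm; rewrite big_cons.
case: m md hsum => [|m'] md hsum.
  have : (0 : R) < 0%:R by rewrite -hsum; lra.
  by rewrite ltxx.
set t := a + a2 - 1.
have t0 : 0 < t by rewrite /t; lra.
have t1 : t <= 1 by rewrite /t; lra.
have B1 : all (fun x => 0 <= x <= 1) (t :: s2) by rewrite /= (ltW t0) t1.
have B2 : \sum_(x <- t :: s2) x = m'%:R.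
  rewrite big_cons /t; move: hsum; rewrite -natr1; lra.
have [hs' [sz' nrm rz sm]] := IH (t :: s2) m' sz (ltnW md) B1 B2.
case: hs' sz' nrm rz sm => [//|k hs2] [sz'] nrm rz sm.
have nk := nrm 0%N isT; rewrite /= in nk.
have [kr kz] := rz 0%N isT; rewrite /= in kr kz.
pose g := (1 - a) / (1 - t).
have [g0 g1 gt] : [/\ 0 <= g, g <= 1 & g * (1 - t) = 1 - a].
  rewrite /g; have [t_1|t_1] := eqVneq t 1.
    rewrite t_1 subrr invr0 mulr0 mul0r; split => //; move: t_1; rewrite /t; lra.
  have tp : 0 < 1 - t by rewrite subr_gt0 lt_def eq_sym t_1 t1.
  split; first by rewrite divr_ge0 //; lra.
    by rewrite ler_pdivrMr // mul1r /t; lra.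
  by rewrite divfK // gt_eqF.
pose c := Num.sqrt g.
pose sn := Num.sqrt (1 - g).
have cc : c * c = g by rewrite -expr2 sqr_sqrtr.
have ss : sn * sn = 1 - g by rewrite -expr2 sqr_sqrtr // subr_ge0.
pose e : 'cV[C]_d := delta_mx (Ordinal md) 0.
have ke : dotp k e = 0 by rewrite dotp_delta kz.
have ee : dotp e e = 1 by rewrite dotp_ee.
have kk : dotp k k = t%:C by rewrite dotpvv nk.
exists [:: c%:C *: k + sn%:C *: e, sn%:C *: k + (- c)%:C *: e & hs2]; split => /=.
- by rewrite sz'.
- case=> [_|[_|j Hj]] /=.
  + apply: vnorm2_of; rewrite dotp2 // kk ee mulr1 -realCM -realCD; apply: congr1.
    rewrite cc ss; move: gt; rewrite mulrBr mulr1; lra.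
  + apply: vnorm2_of; rewrite dotp2 // kk ee mulr1 -realCM -realCD; apply: congr1.
    rewrite mulrNN cc ss; move: gt; rewrite /t mulrBr mulr1; lra.
  + by apply: (nrm j.+1).
- have er : realv e by apply: delta_real.
  have ez : zb m'.+1 e.
    move=> j Hj; rewrite mxE; case: (j =P Ordinal md) => [jm|] //=.
    by move: Hj; rewrite jm /= ltnn.
  have kz' : zb m'.+1 k by apply: zbW kz.
  case=> [_|[_|j Hj]] /=.
  + split; [apply: realvD; exact: realvZ | apply: zbD; exact: zbZ].
  + split; [apply: realvD; exact: realvZ | apply: zbD; exact: zbZ].
  + have [r z] := rz j.+1 Hj; split => //; exact: zbW z.
- rewrite (@DmS R d m' md) -sm !big_cons !outer2 addrA.
  have e1 : c * c + sn * sn = 1 by rewrite cc ss addrC subrK.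
  have e2 : c * sn + sn * - c = 0 by ring.
  have e3 : sn * c + - c * sn = 0 by ring.
  have e4 : sn * sn + - c * - c = 1 by rewrite mulrNN cc ss subrK.
  rewrite comb4; first by rewrite addrAC.
  - by rewrite -realCD e1.
  - by rewrite -realCD e2.
  - by rewrite -realCD e3.
  - by rewrite -realCD e4.
Qed.


End Pars3.

Section PF.
Variable R : realType.
Local Notation C := R[i].

Lemma parseval_fun (N d : nat) (a : 'I_N -> R) : (forall i, 0 <= a i <= 1) ->
  \sum_(i < N) a i = d%:R ->
  exists h : 'I_N -> 'cV[C]_d, [/\ forall i, realv (h i),
     forall i, vnorm (h i) ^+ 2 = a i & Mop h h = 1%:M].
Proof.
move=> a01 asum.
pose s := map a (enum 'I_N).
have ss : size s = N by rewrite size_map size_enum_ord.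
have sall : all (fun x => 0 <= x <= 1) s.
  by apply/allP => x /mapP [i _ ->]; apply: a01.
have ssum : \sum_(x <- s) x = d%:R.
  by rewrite big_map big_enum /= -asum; apply: eq_bigl => i.
have [hs [sz nrm rz sm]] := parseval_seq ss (leqnn d) sall ssum.
have sN : size hs = N by rewrite sz ss.
have nth_s (i : 'I_N) : nth 0 s i = a i.
  rewrite /s (nth_map i) ?size_enum_ord //; congr (a _).
  by apply: val_inj; rewrite /= nth_enum_ord.
exists (fun i => nth 0 hs i); split.
- by move=> i; have [] := rz i; rewrite ?ss.
- by move=> i; rewrite nrm ?ss // nth_s.
- rewrite /Mop; move: sm; rewrite (big_nth 0) sN big_mkord => ->.
  by apply/matrixP => i j; rewrite !mxE ltn_ord andbT.
Qed.

End PF.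

Section Gen.
Variable R : realType.
Local Notation C := R[i].
Variable isreal : bool.
Variables n N : nat.
Implicit Types (F G : 'I_N -> 'cV[C]_n) (q : 'I_N -> R).

Lemma O1_le q F G b : 0 <= b ->
  (forall i, opnorm isreal (err_op q F G [set i]) <= b) -> O1 isreal q F G <= b.
Proof. by move=> b0 H; apply/bigmax_leP; split => // L /cards1P [i ->]. Qed.

Lemma le_O1 q F G i : opnorm isreal (err_op q F G [set i]) <= O1 isreal q F G.
Proof.
by rewrite /O1 (bigD1 [set i]%SET) ?cards1 //= le_max lexx.
Qed.

Lemma A1_le q F G b : 0 <= b ->
  (forall i, (opnorm isreal (err_op q F G [set i]) + specrad (err_op q F G [set i])) / 2 <= b) ->
  A1 isreal q F G <= b.
Proof. by move=> b0 H; apply/bigmax_leP; split => // L /cards1P [i ->]. Qed.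

Lemma le_A1 q F G i :
  (opnorm isreal (err_op q F G [set i]) + specrad (err_op q F G [set i])) / 2 <= A1 isreal q F G.
Proof.
by rewrite /A1 (bigD1 [set i]%SET) ?cards1 //= le_max lexx.
Qed.

Lemma A1_ge0 q F G : 0 <= A1 isreal q F G.
Proof. exact: bigmax_ge_id. Qed.

Lemma O1_ge0 q F G : 0 <= O1 isreal q F G.
Proof. exact: bigmax_ge_id. Qed.

Lemma pair_rho q F G i : 0 <= q i ->
  specrad (err_op q F G [set i]) = q i * cmod (dotp (G i) (F i)).
Proof. by move=> q0; rewrite err_op1 rank1_specrad. Qed.

Lemma pair_lb q F G i : 0 <= q i -> is_dual_pair isreal F G ->
  q i * cmod (dotp (G i) (F i)) <= opnorm isreal (err_op q F G [set i]).
Proof.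
move=> q0 [_ [[GH _] _]]; rewrite err_op1; exact: rank1_opnorm_lb.
Qed.

Lemma A1_le_O1 q F G : (forall i, 0 <= q i) -> is_dual_pair isreal F G ->
  A1 isreal q F G <= O1 isreal q F G.
Proof.
move=> q0 D; apply: A1_le; first exact: O1_ge0.
move=> i; apply: le_trans (le_O1 q F G i).
rewrite pair_rho // ler_pdivrMr // mulr2n mulrDr mulr1 lerD2l.
exact: pair_lb.
Qed.

Lemma A1_ge q F G i : 0 <= q i -> is_dual_pair isreal F G ->
  q i * cmod (dotp (G i) (F i)) <= A1 isreal q F G.
Proof.
move=> q0 D; apply: le_trans (le_A1 q F G i).
rewrite pair_rho // ler_pdivlMr // mulr2n mulrDr mulr1 lerD2r.
exact: pair_lb.
Qed.

End Gen.

Section Cases.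
Variable R : realType.
Local Notation C := R[i].
Variable isreal : bool.
Variables n N : nat.
Implicit Types (F G : 'I_N -> 'cV[C]_n) (q : 'I_N -> R).

Lemma cmod_nat k : cmod (k%:R : C) = k%:R.
Proof. by rewrite -realCn cmodR ger0_norm. Qed.

Lemma low_gen q (hq : forall i, 0 < q i) (hs : \sum_(i < N) (q i)^-1 = n%:R)
  (N0 : (0 < N)%N) F G : is_dual_pair isreal F G -> 1 <= A1 isreal q F G.
Proof.
move=> D; rewrite leNgt; apply/negP => A1lt.
have lt i : cmod (dotp (G i) (F i)) < (q i)^-1.
  rewrite -(ltr_pM2l (hq i)) mulfV ?gt_eqF //.
  exact: le_lt_trans (A1_ge (ltW (hq i)) D) A1lt.
have : cmod (\sum_(i < N) dotp (G i) (F i)) < n%:R.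
  apply: le_lt_trans (cmod_sum _ _ _) _; rewrite -hs; apply: ltr_sum => // .
  by apply/hasP; exists (Ordinal N0); rewrite ?mem_index_enum.
by rewrite (dual_trace D) cmod_nat ltxx.
Qed.

Lemma spec_gen q (hq : forall i, 0 < q i) (hs : \sum_(i < N) (q i)^-1 = n%:R)
  F G : is_dual_pair isreal F G -> A1 isreal q F G <= 1 -> O1 isreal q F G <= 1.
Proof.
move=> D A1le.
have cm_le i : cmod (dotp (G i) (F i)) <= (q i)^-1.
  rewrite -(ler_pM2l (hq i)) mulfV ?gt_eqF //.
  exact: le_trans (A1_ge (ltW (hq i)) D) A1le.
have sum0 : \sum_(i < N) ((q i)^-1 - cmod (dotp (G i) (F i))) = 0.
  apply/eqP; rewrite eq_le; apply/andP; split.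
    rewrite sumrB hs subr_le0; apply: le_trans (cmod_sum _ _ _).
    by rewrite (dual_trace D) cmod_nat.
  by apply: sumr_ge0 => i _; rewrite subr_ge0.
have eqi i : cmod (dotp (G i) (F i)) = (q i)^-1.
  have nn : forall j, true -> 0 <= (q j)^-1 - cmod (dotp (G j) (F j)).
    by move=> j _; rewrite subr_ge0.
  have := psumr_eq0P nn sum0 (i := i) isT.
  by move/eqP; rewrite subr_eq0 => /eqP <-.
apply: O1_le => // i.
have := le_trans (@le_A1 R isreal n N q F G i) A1le.
rewrite pair_rho ?(ltW (hq i)) // eqi mulfV ?gt_eqF //.
rewrite ler_pdivrMr // mul1r; lra.
Qed.

Lemma constr_gen q (hq : forall i, 0 < q i) (a1 : forall i, (q i)^-1 <= 1)
  (hs : \sum_(i < N) (q i)^-1 = n%:R) :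
  exists F0 G0 : 'I_N -> 'cV[C]_n, is_dual_pair isreal F0 G0 /\ O1 isreal q F0 G0 <= 1.
Proof.
have b01 : forall i, 0 <= (q i)^-1 <= 1.
  by move=> i; rewrite a1 invr_ge0 ltW.
have [h [hr hn hM]] := @parseval_fun R N n (fun i => (q i)^-1) b01 hs.
exists h, h; split; first by apply: parseval_dual => // i _; apply: hr.
apply: O1_le => // i; rewrite err_op1; apply: opnorm_le => // v vH.
apply: le_trans (@rank1_bound R isreal n (q i) (h i) (h i) v (ltW (hq i)) vH) _.
by rewrite -mulrA -expr2 hn mulfV ?gt_eqF.
Qed.

Lemma framework q c (qnn : forall i, 0 <= q i)
  (low : forall F' G', is_dual_pair isreal F' G' -> c <= A1 isreal q F' G')
  F G
  (constr : is_dual_pair isreal F G ->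
     exists F0 G0, is_dual_pair isreal F0 G0 /\ O1 isreal q F0 G0 <= c)
  (spec : is_dual_pair isreal F G -> A1 isreal q F G <= c -> O1 isreal q F G <= c) :
  is_POD1 isreal q F G <-> is_PASOD1 isreal q F G.
Proof.
have inf_eq (f : ('I_N -> 'cV[C]_n) * ('I_N -> 'cV[C]_n) -> R) :
  (forall FG, @dual_pairs R isreal n N FG -> c <= f FG) ->
  (exists FG, @dual_pairs R isreal n N FG /\ f FG <= c) ->
  inf [set f FG | FG in @dual_pairs R isreal n N] = c.
  move=> lb [FG0 [D0 f0]]; apply/eqP; rewrite eq_le; apply/andP; split.
    apply: le_trans f0; apply: ge_inf; last by exists FG0.
    by exists c => x [FG D <-]; apply: lb.
  by apply: lb_le_inf; [exists (f FG0), FG0 | move=> x [FG D <-]; apply: lb].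
have opt (D : is_dual_pair isreal F G) :
    @O1_opt R isreal n N q = c /\ @A1_opt R isreal n N q = c.
  have [F0 [G0 [D0 O0]]] := constr D.
  split; apply: inf_eq.
  - move=> [F' G'] /= D'; apply: le_trans (low _ _ D') _; exact: A1_le_O1.
  - by exists (F0, G0).
  - by move=> [F' G'] /= D'; apply: low.
  - exists (F0, G0); split => //=; apply: le_trans O0; exact: A1_le_O1.
split => [[D E]|[D E]]; have [Oo Ao] := opt D; split => //.
  rewrite Ao; apply/eqP; rewrite eq_le low // andbT -Oo -E; exact: A1_le_O1.
rewrite Oo; apply/eqP; rewrite eq_le; apply/andP; split.
  by apply: spec => //; rewrite E Ao.
by rewrite -Ao -E; exact: A1_le_O1.
Qed.

End Cases.

Section Sq.
Variable R : realType.
Local Notation C := R[i].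
Variable isreal : bool.
Variable n : nat.
Implicit Types (F G : 'I_n -> 'cV[C]_n) (q : 'I_n -> R).

Definition Qmax q := \big[Num.max/0]_(i < n) q i.

Lemma Qmax_ge0 q : 0 <= Qmax q.
Proof. exact: bigmax_ge_id. Qed.

Lemma le_Qmax q i : q i <= Qmax q.
Proof. exact: le_bigmax. Qed.

Lemma low_sq q (q0 : forall i, 0 <= q i) F G :
  is_dual_pair isreal F G -> Qmax q <= A1 isreal q F G.
Proof.
move=> D; apply/bigmax_leP; split; first exact: A1_ge0.
move=> i _; have := A1_ge (q0 i) D.
by rewrite (dual_biorth D) eqxx cmod_nat mulr1.
Qed.

Lemma constr_sq q (q0 : forall i, 0 <= q i) :
  exists F0 G0 : 'I_n -> 'cV[C]_n, is_dual_pair isreal F0 G0 /\ O1 isreal q F0 G0 <= Qmax q.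
Proof.
have b01 : forall i : 'I_n, 0 <= (fun _ => 1 : R) i <= 1 by move=> i; rewrite ler01 lexx.
have hs : \sum_(i < n) (fun _ => 1 : R) i = n%:R by rewrite sumr_const card_ord.
have [h [hr hn hM]] := @parseval_fun R n n (fun _ => 1) b01 hs.
exists h, h; split; first by apply: parseval_dual => // i _; apply: hr.
apply: O1_le; first exact: Qmax_ge0.
move=> i; rewrite err_op1; apply: opnorm_le; first exact: Qmax_ge0.
move=> v vH; apply: le_trans (@rank1_bound R isreal n (q i) (h i) (h i) v (q0 i) vH) _.
by rewrite -mulrA -expr2 hn mulr1 le_Qmax.
Qed.

Lemma spec_sq q (q0 : forall i, 0 <= q i) F G :
  is_tight_frame isreal F -> is_dual_pair isreal F G -> O1 isreal q F G <= Qmax q.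
Proof.
move=> [FH [A [A0 HA]]] D.
have GH : forall i, inH isreal (G i) by case: D => _ [[]].
have gi i : A * vnorm (G i) ^+ 2 = 1.
  have fs : frame_sum F (G i) = 1.
    rewrite /frame_sum (bigD1 i) //= big1 => [|j /negbTE ji].
      by rewrite (dual_biorth D) eqxx cmod_nat expr1n addr0.
    by rewrite (dual_biorth D) eq_sym ji cmod_nat expr0n.
  have [h1 h2] := HA _ (GH i); rewrite fs in h1 h2.
  by apply/eqP; rewrite eq_le h1 h2.
apply: O1_le; first exact: Qmax_ge0.
move=> i; rewrite err_op1; apply: opnorm_le; first exact: Qmax_ge0.
move=> v [vH v1]; rewrite rank1_vnorm //.
apply: le_trans (le_Qmax q i); rewrite -mulrA ler_piMr //.
have x0 : 0 <= cmod (dotp v (F i)) * vnorm (G i) by rewrite mulr_ge0 ?cmod_ge0 ?vnorm_ge0.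
rewrite -(expr_le1 (n := 2)) // exprMn.
have fv : frame_sum F v = A.
  have [h1 h2] := HA _ vH; rewrite v1 expr1n mulr1 in h1 h2.
  by apply/eqP; rewrite eq_le h1 h2.
have c1 : cmod (dotp v (F i)) ^+ 2 <= A.
  rewrite -fv /frame_sum (bigD1 i) //= lerDl sumr_ge0 // => j _; exact: sqr_ge0.
apply: le_trans (ler_wpM2r (sqr_ge0 _) c1) _.
by rewrite gi.
Qed.

End Sq.

Section Zero.
Variable R : realType.
Local Notation C := R[i].
Variable isreal : bool.

Lemma no_unit0 (v : 'cV[C]_0) : ~ unitH isreal v.
Proof. by move=> [_]; rewrite /vnorm big_ord0 sqrtr0 => /eqP; rewrite eq_sym oner_eq0. Qed.

Lemma opnorm0d (T : 'M[C]_0) : opnorm isreal T = 0.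
Proof.
apply/eqP; rewrite eq_le; apply/andP; split.
  by apply: opnorm_le => // v /no_unit0.
by apply: (@opnorm_ge0 R isreal 0 T 0) => v /no_unit0.
Qed.

Lemma O1_0d N (q : 'I_N -> R) (F G : 'I_N -> 'cV[C]_0) : O1 isreal q F G <= 0.
Proof. by apply: O1_le => // i; rewrite opnorm0d. Qed.

Lemma constr_0d N (q : 'I_N -> R) :
  exists F0 G0 : 'I_N -> 'cV[C]_0, is_dual_pair isreal F0 G0 /\ O1 isreal q F0 G0 <= 0.
Proof.
exists (fun _ => 0), (fun _ => 0); split; last exact: O1_0d.
apply: parseval_dual; first by move=> i _ [].
by rewrite thinmx0 [RHS]thinmx0.
Qed.

End Zero.

Section Weight.
Variable R : realType.

Lemma N_ge2 N (p : 'I_N -> R) : is_prob_seq p -> (forall i, p i < 1) -> (1 < N)%N.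
Proof.
case: N p => [|[|N']] p [_ ps] hlt //.
  by move: ps; rewrite big_ord0 => /eqP; rewrite eq_sym oner_eq0.
by move: ps (hlt ord0); rewrite big_ord1 => ->; rewrite ltxx.
Qed.

Variables n N : nat.
Variable p : 'I_N -> R.
Hypothesis Hp : is_prob_seq p.
Hypothesis Hlt : forall i, p i < 1.
Hypothesis npos : (0 < n)%N.

Lemma psum : \sum_(i < N) p i = 1.
Proof. by case: Hp. Qed.

Lemma Nm1_pos : 0 < N%:R - 1 :> R.
Proof. by rewrite subr_gt0 ltr1n; exact: N_ge2 Hp Hlt. Qed.

Lemma weightE i : weight n p i = (1 - p i)^-1 * ((N%:R - 1) / n%:R).
Proof. by rewrite /weight psum div1r. Qed.

Lemma weight_pos i : 0 < weight n p i.
Proof.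
rewrite weightE mulr_gt0 ?invr_gt0 ?subr_gt0 ?Hlt //.
by rewrite divr_gt0 ?Nm1_pos // ltr0n.
Qed.

Lemma weight_inv i : (weight n p i)^-1 = (1 - p i) * (n%:R / (N%:R - 1)).
Proof. by rewrite weightE invfM invrK invf_div. Qed.

Lemma weight_sum : \sum_(i < N) (weight n p i)^-1 = n%:R.
Proof.
under eq_bigr => i _ do rewrite weight_inv.
rewrite -mulr_suml sumrB sumr_const card_ord psum.
have := Nm1_pos; move=> h; field; by rewrite gt_eqF.
Qed.

Lemma weight_inv_le1 i : (n < N)%N -> (weight n p i)^-1 <= 1.
Proof.
move=> nN; rewrite weight_inv.
have [p0 p1] := (proj1 Hp) i.
have h2 : n%:R / (N%:R - 1) <= 1 :> R.
  rewrite ler_pdivrMr ?Nm1_pos // mul1r lerBrDr.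
  by rewrite natr1 ler_nat.
have p0' : 0 <= 1 - p i by rewrite subr_ge0.
apply: le_trans (ler_wpM2l p0' h2) _.
by rewrite mulr1 lerBlDr lerDl.
Qed.

End Weight.

Unset Implicit Arguments.
Local Close Scope complex_scope.

Theorem theorem4p3 (R : realType) (isreal : bool) (n N : nat)
  (F : 'I_N -> 'cV[R[i]]_n) (p : 'I_N -> R) :
  is_tight_frame isreal F ->
  is_prob_seq p ->
  (forall i, p i < 1) ->
  (is_POD1 isreal (weight n p) F (canon_dual F) <->
   @zeta1 R isreal n N (weight n p) (F, canon_dual F)).
Proof.
move=> Ht Hp Hlt.
change (is_POD1 isreal (weight n p) F (canon_dual F) <->
  is_PASOD1 isreal (weight n p) F (canon_dual F)).
have N2 := N_ge2 Hp Hlt.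
have [n0|npos] := eqVneq n 0%N.
  subst n.
  apply: (@framework R isreal 0 N (weight 0 p) 0).
  - by move=> i; rewrite /weight invr0 !mulr0.
  - by move=> F' G' _; apply: A1_ge0.
  - by move=> _; apply: constr_0d.
  - by move=> _ _; apply: O1_0d.
have npos' : (0 < n)%N by rewrite lt0n.
have qpos := weight_pos Hp Hlt npos'.
have hs := weight_sum n Hp Hlt.
have [Nn|Nn] := eqVneq N n.
  subst N.
  apply: (@framework R isreal n n (weight n p) (Qmax (weight n p))).
  - by move=> i; apply: ltW.
  - by move=> F' G' D; apply: low_sq => // i; apply: ltW.
  - by move=> _; apply: constr_sq => i; apply: ltW.
  - by move=> D _; apply: spec_sq => // i; apply: ltW.
apply: (@framework R isreal n N (weight n p) 1).
- by move=> i; apply: ltW.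
- by move=> F' G' D; apply: low_gen => //; apply: ltnW.
- move=> D; have nN := dual_rank D.
  have nlt : (n < N)%N by rewrite ltn_neqAle eq_sym Nn nN.
  apply: constr_gen => // i.
  exact: (weight_inv_le1 Hp Hlt i nlt).
- by move=> D; apply: spec_gen.
Qed.
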